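(* Let $\pi=\pi_1\cdots\pi_n$ be a permutation of $\{1,\dots,n\}$. The Schröder insertion tableau $P(\pi)$ has a single column (i.e. every row of $P(\pi)$ has at most $2$ cells) if and only if $\pi$ avoids both patterns $123$ and $213$.
   Context: A Schröder tableau consists of rows $1,2,\dots$; row $r$ has $\lambda_r$ cells at positions $1,\dots,\lambda_r$, each filled with a number; cells at odd positions are upper triangles, at even positions lower triangles, and positions $2m-1,2m$ form the $m$-th square column. The Schröder insertion tableau $P(\pi)$ is built as follows. Start with $P$ having one row containing $\pi_1$. For $k=2,\dots,n$, insert $\alpha=\pi_k$ into row $i=1$ by the rule: if row $i$ is empty or $\alpha$ is larger than all its entries, place $\alpha$ in a new cell at the end of row $i$ and stop. Otherwise let $j$ be the position in row $i$ of the smallest entry larger than $\alpha$. If $j$ is even: remove the entry $\beta$ at position $j$, write $\alpha$ there, and insert $\beta$ into row $i+1$ by the same rule. If $j$ is odd and position $j+1$ exists in row $i$ with entry $\beta$: move the entry of position $j$ to position $j+1$, write $\alpha$ at position $j$, and insert $\beta$ into row $i+1$. If $j$ is odd and is the last position of row $i$: move the entry of position $j$ into a new cell at position $j+1$ at the end of row $i$, write $\alpha$ at position $j$, and stop. A permutation $\tau$ contains a pattern $\sigma$ of length $k$ if some subsequence $\tau_{i_1}\cdots\tau_{i_k}$ ($i_1<\dots<i_k$) is order-isomorphic to $\sigma$; otherwise it avoids $\sigma$. *)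

(* Defs.v *)
From mathcomp Require Import all_boot.
Set Implicit Arguments. Unset Strict Implicit. Unset Printing Implicit Defensive.

(* Position p (1-based, as in the paper) of a row is list index p-1 (0-based).
   Hence paper-odd positions (upper triangles) are even list indices. *)
Definition row := seq nat.
Definition tableau := seq row.

(* 0-based index of the smallest entry of r larger than a (assumes one exists) *)
Definition smallest_larger_idx (r : row) (a : nat) : nat :=
  let bigger := [seq x <- r | a < x] in
  let m := foldr minn (head 0 bigger) bigger in
  index m r.

Definition row_insert (r : row) (a : nat) : row * option nat :=
  if all (fun x => x < a) r then (rcons r a, None) else
  let j := smallest_larger_idx r a in
  if odd j then (* paper position j+1 is even *)
    (set_nth 0 r j a, Some (nth 0 r j))
  else if j.+1 < size r then
    (set_nth 0 (set_nth 0 r j.+1 (nth 0 r j)) j a, Some (nth 0 r j.+1))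
  else
    (set_nth 0 (rcons r (nth 0 r j)) j a, None).

Fixpoint tab_insert (t : tableau) (a : nat) : tableau :=
  match t with
  | [::] => [:: [:: a]]
  | r :: t' =>
      let: (r', ob) := row_insert r a in
      match ob with
      | None => r' :: t'
      | Some b => r' :: tab_insert t' b
      end
  end.

Definition schroder_P (pi : seq nat) : tableau :=
  match pi with
  | [::] => [::]
  | p1 :: rest => foldl tab_insert [:: [:: p1]] rest
  end.

Definition is_perm (n : nat) (pi : seq nat) : Prop := perm_eq pi (iota 1 n).

Definition order_iso (s t : seq nat) : bool :=
  (size s == size t) &&
  [forall i : 'I_(size s), forall j : 'I_(size s),
     (nth 0 s i < nth 0 s j) == (nth 0 t i < nth 0 t j)].

Definition contains (tau sigma : seq nat) : Prop :=
  exists s, subseq s tau /\ order_iso s sigma.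

Definition avoids (tau sigma : seq nat) : Prop := ~ contains tau sigma.

(* Main.v *)
Require Import Defs.
From mathcomp Require Import all_boot zify.
Set Implicit Arguments. Unset Strict Implicit.

Lemma ri_min2 a b x : x < a -> a < b -> row_insert [::a;b] x = ([::x;a], Some b).
Proof.
move=> xa ab; have xb : x < b by lia.
have ax : (a < x) = false by lia.
rewrite /row_insert /smallest_larger_idx /= ax xa xb /=.
have -> : minn a (minn b a) = a by lia.
by rewrite eqxx.
Qed.

Lemma ri_min1 a x : x < a -> row_insert [::a] x = ([::x;a], None).
Proof.
move=> xa; have ax : (a < x) = false by lia.
by rewrite /row_insert /smallest_larger_idx /= ax xa /= minnn eqxx.
Qed.

Lemma ri_mid m b x : m < x -> x < b -> row_insert [::m;b] x = ([::m;x], Some b).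
Proof.
move=> mx xb; have bx : (b < x) = false by lia.
have xm : (x < m) = false by lia.
have mb : (m == b) = false by apply/eqP; lia.
by rewrite /row_insert /smallest_larger_idx /= bx xm xb mx /= minnn mb eqxx.
Qed.

Lemma ri_one m x : m < x -> row_insert [::m] x = ([::m;x], None).
Proof. by move=> mx; rewrite /row_insert /= mx. Qed.

Lemma ri_big m b x : m < x -> b < x -> row_insert [::m;b] x = ([::m;b;x], None).
Proof. by move=> mx bx; rewrite /row_insert /= mx bx. Qed.

Fixpoint chunk2 (s : seq nat) : seq (seq nat) :=
  match s with a :: b :: l => [:: a; b] :: chunk2 l | [:: a] => [:: [:: a]] | [::] => [::] end.

Lemma tab_insert_cons r t a : tab_insert (r :: t) a =
  match row_insert r a with (r', None) => r' :: t | (r', Some b) => r' :: tab_insert t b end.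
Proof. by []. Qed.

Lemma insA n : forall s x, size s <= n -> path ltn x s -> tab_insert (chunk2 s) x = chunk2 (x :: s).
Proof.
elim: n => [|n IH] [|a [|b l]] x // Hs.
- by move=> /andP[xa _]; rewrite [chunk2 _]/= tab_insert_cons ri_min1.
- case/and3P => xa ab pl; rewrite [chunk2 (a :: _)]/= tab_insert_cons ri_min2 // IH //=.
  by move: Hs => /=; lia.
Qed.

Lemma insB m s x : m < x -> path ltn x s -> tab_insert (chunk2 (m :: s)) x = chunk2 (m :: x :: s).
Proof.
case: s => [|b l] mx; first by rewrite [chunk2 _]/= tab_insert_cons ri_one.
case/andP => xb pl; rewrite [chunk2 (m :: _)]/= tab_insert_cons ri_mid // (@insA (size l)) //=.
Qed.

Definition hd_size (t : tableau) := size (head [::] t).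

Lemma row_insert_size r a : size r <= size (row_insert r a).1.
Proof.
rewrite /row_insert; case: ifP => _; first by rewrite size_rcons.
case: ifP => _ /=; first by rewrite size_set_nth; lia.
case: ifP => _ /=; first by rewrite !size_set_nth; lia.
by rewrite size_set_nth size_rcons; lia.
Qed.

Lemma hd_mono t a : hd_size t <= hd_size (tab_insert t a).
Proof.
case: t => [|r t] //; rewrite tab_insert_cons /hd_size /=.
have := row_insert_size r a; case: row_insert => r' [b|] //.
Qed.

Lemma hd_fold w t : hd_size t <= hd_size (foldl tab_insert t w).
Proof.
elim: w t => [|x w IH] t //=; exact: leq_trans (hd_mono t x) (IH _).
Qed.

Lemma chunk2_rows s r : r \in chunk2 s -> size r <= 2.
Proof.
move: {2}(size s) (leqnn (size s)) => n; elim: n s => [|n IH] [|a [|b l]] //= Hs;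
 rewrite ?inE; try (by move/eqP->).
- by case/orP => [/eqP->|]; [|apply: IH; lia].
Qed.

Lemma cnt_ge m l x : path ltn m l -> x <= m -> count (fun y => y < x) l = 0.
Proof.
elim: l m => [|y l IH] m //= /andP[my pl] xm.
have -> : (y < x) = false by apply/negbTE; rewrite -leqNgt; exact: ltnW (leq_ltn_trans xm my).
by rewrite (IH y) //; apply: ltnW (leq_ltn_trans xm my).
Qed.

Lemma case0 s x : sorted ltn s -> count (fun y => y < x) s = 0 -> x \notin s -> path ltn x s.
Proof.
case: s => [|m l] //= pl; case: (ltnP m x) => //= mx _.
rewrite inE negb_or => /andP[/eqP xm _]; rewrite pl andbT; lia.
Qed.

Lemma case1 s x : sorted ltn s -> count (fun y => y < x) s = 1 -> x \notin s ->
  exists m l, [/\ s = m :: l, m < x & path ltn x l].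
Proof.
case: s => [|m l] //= pl; case: (ltnP m x) => /=.
  move=> mx [c0]; rewrite inE negb_or => /andP[_ xl]; exists m, l; split => //.
  by apply: case0 => //; exact: path_sorted pl.
move=> xm; by rewrite (cnt_ge pl xm).
Qed.

Lemma case2 s x : sorted ltn s -> 1 < count (fun y => y < x) s ->
  exists m b l, [/\ s = m :: b :: l, m < x & b < x].
Proof.
case: s => [|m [|b l]] //=; first by case: (m < x).
case/andP => mb pl; case: (ltnP b x) => bx.
  case: (ltnP m x) => mx; first by exists m, b, l.
  by exfalso; lia.
rewrite (cnt_ge pl bx) addn0.
by case: (m < x).
Qed.

Definition badw (u w : seq nat) := exists w1 x w2, w = w1 ++ x :: w2 /\ 1 < count (fun y => y < x) (u ++ w1).

Lemma main w : forall u s, uniq (u ++ w) -> sorted ltn s -> perm_eq s u ->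
 (~ badw u w -> exists s', sorted ltn s' /\ foldl tab_insert (chunk2 s) w = chunk2 s') /\
 (badw u w -> 2 < hd_size (foldl tab_insert (chunk2 s) w)).
Proof.
elim: w => [|x w IH] u s Hu Hs Hp.
  split; first by move=> _; exists s.
  by case=> [[|? ?] [? [? []]]].
have Hc : count (fun y => y < x) s = count (fun y => y < x) u by apply/permP.
have xu : x \notin u.
  by move: Hu; rewrite cat_uniq /= => /and3P[_ /norP[] ].
have xs : x \notin s by rewrite (perm_mem Hp).
have Hu' : uniq (rcons u x ++ w) by rewrite cat_rcons.
have Hbad : count (fun y => y < x) u < 2 -> (badw u (x :: w) <-> badw (rcons u x) w).
  move=> c2; split.
    case=> [[|y w1] [x0 [w2 []]]] /=.
      by case=> <- _; rewrite cats0 => c; move: c2; rewrite ltnNge c.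
    by case=> <- -> c; exists w1, x0, w2; split => //; rewrite cat_rcons.
  by case=> [w1 [x0 [w2 [-> c]]]]; exists (x :: w1), x0, w2; split => //; rewrite -cat_rcons.
case: (ltnP (count (fun y => y < x) u) 2) => c.
- have [s' [Hs' Hi Hp']] : exists s', [/\ sorted ltn s', tab_insert (chunk2 s) x = chunk2 s' &
      perm_eq s' (rcons u x)].
    move: c; rewrite -Hc; case Ec: count => [|[|//]] _.
      exists (x :: s); split => //.
      + exact: case0.
      + by rewrite (@insA (size s)) // case0.
      + by rewrite perm_sym perm_rcons perm_cons perm_sym.
    have [m [l [Es mx pl]]] := case1 Hs Ec xs.
    exists (m :: x :: l); split.
      + by rewrite /= mx.
      + by rewrite Es insB.
      + rewrite perm_sym perm_rcons perm_sym; apply: (@perm_trans _ (x :: s)); last by rewrite perm_cons.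
        by rewrite Es; apply/permP => a /=; rewrite addnCA.
  have [IH1 IH2] := IH _ _ Hu' Hs' Hp'.
  rewrite /= Hi; split.
    by move=> nb; apply: IH1 => b; apply: nb; apply/Hbad.
  by move=> b; apply: IH2; apply/Hbad.
- split.
    by move=> nb; exfalso; apply: nb; exists [::], x, w; rewrite cats0.
  move=> _ /=; apply: leq_trans (hd_fold _ _).
  have Hc2 : 1 < count (fun y => y < x) s by rewrite Hc.
  have [m [b [l [Es mx bx]]]] := case2 Hs Hc2.
  by rewrite Es [chunk2 _]/= tab_insert_cons ri_big.
Qed.

Lemma oi a b c (x y z : nat) : (a < b) = (x < y) -> (b < c) = (y < z) -> (a < c) = (x < z) ->
  (b < a) = (y < x) -> (c < b) = (z < y) -> (c < a) = (z < x) ->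
  order_iso [:: a; b; c] [:: x; y; z].
Proof.
move=> e1 e2 e3 e4 e5 e6; rewrite /order_iso /=; apply/forallP => i; apply/forallP => j.
case: i => [[|[|[|i]]] Hi] //=; case: j => [[|[|[|j]]] Hj] //=;
  by rewrite ?ltnn ?e1 ?e2 ?e3 ?e4 ?e5 ?e6.
Qed.

Lemma bad_contains pi : uniq pi -> badw [::] pi -> contains pi [:: 1; 2; 3] \/ contains pi [:: 2; 1; 3].
Proof.
move=> Hu [w1 [x [w2 [Epi Hc]]]].
set f := [seq y <- w1 | y < x].
have Hsf : 1 < size f by rewrite size_filter.
have Hf : uniq f by apply: filter_uniq; move: Hu; rewrite Epi cat_uniq => /andP[].
case Ef : f Hsf Hf => [|a [|b r]] //= _ /andP[]; rewrite inE negb_or => /andP[/eqP ab _] _.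
have : a \in f by rewrite Ef inE eqxx.
have : b \in f by rewrite Ef !inE eqxx orbT.
rewrite !mem_filter => /andP[bx _] /andP[ax _].
have Hs : subseq [:: a; b; x] pi.
  rewrite Epi (_ : [:: a; b; x] = [:: a; b] ++ [:: x]) //; apply: cat_subseq.
    apply: subseq_trans (filter_subseq (fun y => y < x) w1); rewrite -/f Ef /= !eqxx.
    exact: sub0seq.
  by rewrite /= eqxx sub0seq.
case: (ltnP a b) => hab.
  left; exists [:: a; b; x]; split => //; apply: oi => //; lia.
right; exists [:: a; b; x]; split => //; apply: oi => //; lia.
Qed.

Lemma contains_bad pi sg : uniq pi -> (sg = [:: 1; 2; 3] \/ sg = [:: 2; 1; 3]) -> contains pi sg -> badw [::] pi.
Proof.
move=> Hu Hsg [s [Hs /andP[Hsz /forallP H]]].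
have Hsz3 : size s = 3 by rewrite (eqP Hsz); case: Hsg => ->.
case Es : s Hsz3 Hs H => [|a [|b [|c [|? ?]]]] //= _ Hs H.
have H02 := H (Ordinal (isT : 0 < 3)); move/forallP: H02 => /(_ (Ordinal (isT : 2 < 3))) /eqP /= H02.
have H12 := H (Ordinal (isT : 1 < 3)); move/forallP: H12 => /(_ (Ordinal (isT : 2 < 3))) /eqP /= H12.
have ac : a < c by rewrite H02; case: Hsg => ->.
have bc : b < c by rewrite H12; case: Hsg => ->.
have cin : c \in pi by apply: (mem_subseq Hs); rewrite !inE eqxx !orbT.
case/splitPr: cin Hu Hs => w1 w2 Hu Hs.
exists w1, c, w2; split => //.
have : subseq ([:: a; b] ++ c :: [::]) (w1 ++ c :: w2) by [].
rewrite uniq_subseq_pivot // => /andP[Hs1 _].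
apply: leq_trans (leq_count_subseq (fun y => y < c) Hs1); by rewrite /= ac bc.
Qed.

Lemma bad0 p rest : badw [::] (p :: rest) <-> badw [:: p] rest.
Proof.
split.
  case=> [[|y w1] [x0 [w2 []]]] //=.
  by case=> <- -> c; exists w1, x0, w2.
by case=> [w1 [x0 [w2 [-> c]]]]; exists (p :: w1), x0, w2.
Qed.

Theorem mainTheorem9 (n : nat) (pi : seq nat) :
  is_perm n pi ->
  ((forall r, r \in schroder_P pi -> size r <= 2) <->
   (avoids pi [:: 1; 2; 3] /\ avoids pi [:: 2; 1; 3])).
Proof.
move=> Hp; have Hu : uniq pi by rewrite (perm_uniq Hp) iota_uniq.
have Hb : (avoids pi [:: 1; 2; 3] /\ avoids pi [:: 2; 1; 3]) <-> ~ badw [::] pi.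
  split.
    by case=> h1 h2 /(bad_contains Hu) [].
  move=> nb; split => hc; apply: nb; apply: (contains_bad Hu _ hc); by [left | right].
rewrite Hb; case: pi Hu {Hp Hb} => [|p rest] Hu.
  split => // _; by case=> [[|? ?] [? [? []]]].
rewrite bad0.
have [M1 M2] := @main rest [:: p] [:: p] Hu (erefl _) (perm_refl _).
rewrite /schroder_P -[[:: [:: p]]]/(chunk2 [:: p]).
split.
  move=> H /M2; rewrite /hd_size; case E: foldl => [|r t] //= Hr.
  by have := H r; rewrite E inE eqxx => /(_ isT); rewrite leqNgt Hr.
by move=> /M1 [s' [_ ->]] r; apply: chunk2_rows.
Qed.
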